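(* Let $\rho$ be a density operator on $A\otimes B$ with $A\cong B\cong\mathbb{C}^d$, let $0\le\varepsilon\le1$, and let $\sigma = \Delta_\varepsilon(\rho) = (1-\varepsilon)\rho + \frac{\varepsilon}{d^2}I$. Then $D_H^2(\sigma\|\sigma_A\otimes\sigma_B)\le C\sqrt{\varepsilon} + D_H^2(\rho\|\rho_A\otimes\rho_B)$, where the constant can be taken as $C = 4+4\sqrt2$.
   Context: $\rho_A,\rho_B$ (resp. $\sigma_A,\sigma_B$) are partial traces. $D_H^2(\rho\|\sigma) = \mathrm{tr}((\sqrt\rho-\sqrt\sigma)^2)$ is the squared quantum Hellinger distance. *)

(* Defs.v *)
(* complex numbers C := R[i] over a realType R
   (mathcomp-real-closed's complex), matrices 'M[C]_(d*d) on A (x) B with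
   the Kronecker product tensmx / index convention of real_closed/mxtens. *)
From mathcomp Require Import all_boot all_algebra.
From mathcomp Require Import reals.
From mathcomp.real_closed Require Export complex mxtens.
From Stdlib Require Import ClassicalEpsilon.

Set Implicit Arguments.
Unset Strict Implicit.
Unset Printing Implicit Defensive.
Import GRing.Theory Num.Theory.
Local Open Scope ring_scope.

Section QDefs.
Variable R : realType.
Local Notation C := (R[i]).

Definition rc (x : R) : C := (x%:C)%C.

Definition adjmx m n (M : 'M[C]_(m, n)) : 'M[C]_(n, m) := (map_mx conjc M)^T.

Definition psdmx n (M : 'M[C]_n) : Prop :=
  adjmx M = M /\ forall v : 'rV[C]_n, 0 <= (v *m M *m adjmx v) 0 0.

Definition density n (M : 'M[C]_n) : Prop := psdmx M /\ \tr M = 1.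

Definition sqrtmx n (M : 'M[C]_n) : 'M[C]_n :=
  epsilon (inhabits 0) (fun X : 'M[C]_n => psdmx X /\ X *m X = M).

Definition hellinger2 n (rho sigma : 'M[C]_n) : C :=
  let D := sqrtmx rho - sqrtmx sigma in \tr (D *m D).

(* partial traces on A (x) B, with |i>|j> indexed by mxtens_index (i, j) *)
Definition trB d1 d2 (M : 'M[C]_(d1 * d2)) : 'M[C]_d1 :=
  \matrix_(i, k) \sum_(j < d2) M (mxtens_index (i, j)) (mxtens_index (k, j)).
Definition trA d1 d2 (M : 'M[C]_(d1 * d2)) : 'M[C]_d2 :=
  \matrix_(j, l) \sum_(i < d1) M (mxtens_index (i, j)) (mxtens_index (i, l)).

Definition depol d (eps : R) (M : 'M[C]_(d * d)) : 'M[C]_(d * d) :=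
  rc (1 - eps) *: M + rc (eps / (d ^ 2)%:R) *: 1%:M.

End QDefs.

(* Main.v *)
Require Import Defs.
From mathcomp Require Import all_boot all_algebra.
From mathcomp Require Import reals.
From mathcomp.real_closed Require Import complex mxtens.
From mathcomp Require Import all_order spectral sesquilinear ring lra.
From Stdlib Require Import ClassicalEpsilon.
Import Order.TTheory GRing.Theory Num.Theory Num.Def.
Local Open Scope ring_scope.
Set Implicit Arguments.
Unset Strict Implicit.
Unset Printing Implicit Defensive.

Section S.
Variable R : realType.
Local Notation C := (R[i]).

Local Notation "M ^H" := (adjmx M) (at level 8, format "M ^H").

Lemma adjmxE m n (M : 'M[C]_(m, n)) : M^H = (M ^t conjC)%sesqui.
Proof. by apply/matrixP => i j; rewrite !mxE. Qed.

Lemma adjmx_mul m n p (A : 'M[C]_(m, n)) (B : 'M[C]_(n, p)) :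
  (A *m B)^H = B^H *m A^H.
Proof. by rewrite /adjmx map_mxM trmx_mul. Qed.

Lemma adjmxK m n (A : 'M[C]_(m, n)) : A^H^H = A.
Proof. by apply/matrixP => i j; rewrite !mxE conjcK. Qed.

Lemma adjmxD m n (A B : 'M[C]_(m, n)) : (A + B)^H = A^H + B^H.
Proof. by apply/matrixP => i j; rewrite !mxE rmorphD. Qed.

Lemma adjmxN m n (A : 'M[C]_(m, n)) : (- A)^H = - A^H.
Proof. by apply/matrixP => i j; rewrite !mxE rmorphN. Qed.

Lemma adjmxB m n (A B : 'M[C]_(m, n)) : (A - B)^H = A^H - B^H.
Proof. by rewrite adjmxD adjmxN. Qed.

Lemma adjmxZ m n (a : C) (A : 'M[C]_(m, n)) : (a *: A)^H = (Num.conj a) *: A^H.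
Proof. by apply/matrixP => i j; rewrite !mxE rmorphM. Qed.

Lemma adjmx1 n : (1%:M : 'M[C]_n)^H = 1%:M.
Proof. by apply/matrixP => i j; rewrite !mxE conjc_nat eq_sym. Qed.

Lemma rc_conj (x : R) : Num.conj (rc x) = rc x.
Proof. exact: conjc_real. Qed.

Lemma unitary_adj n (P : 'M[C]_n) : P \is unitarymx -> P *m P^H = 1%:M.
Proof. by move=> /unitarymxP; rewrite adjmxE. Qed.

Lemma unitary_adj' n (P : 'M[C]_n) : P \is unitarymx -> P^H *m P = 1%:M.
Proof.
move=> Pu; rewrite adjmxE -invmx_unitary // mulVmx //.
exact: unitarymx_unit.
Qed.

Lemma herm_normal n (A : 'M[C]_n) : A^H = A -> A \is normalmx.
Proof. move=> hA; apply/normalmxP; rewrite adjmxE in hA; rewrite hA; reflexivity. Qed.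

Lemma spectral_decomp n (A : 'M[C]_n) : A^H = A ->
  A = (spectralmx A)^H *m diag_mx (spectral_diag A) *m spectralmx A.
Proof.
move=> /herm_normal /orthomx_spectralP hA.
rewrite invmx_unitary in hA; last exact: spectral_unitarymx.
rewrite adjmxE. exact: hA.
Qed.

Lemma row_eigen n (A : 'M[C]_n) k : A^H = A ->
  row k (spectralmx A) *m A = spectral_diag A 0 k *: row k (spectralmx A).
Proof.
move=> hA.
have E : row k (spectralmx A) *m A = row k (spectralmx A *m A) by rewrite row_mul.
rewrite E [X in row _ (_ *m X)](spectral_decomp hA) !mulmxA.
rewrite (unitary_adj (spectral_unitarymx A)) mul1mx.
rewrite row_mul row_diag_mx -scalemxAl -rowE.
reflexivity.
Qed.

Lemma row_unit n (P : 'M[C]_n) k : P \is unitarymx ->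
  (row k P *m (row k P)^H) 0 0 = 1.
Proof.
move=> Pu; have /matrixP /(_ k k) H := unitary_adj Pu.
rewrite !mxE eqxx mulr1n in H; rewrite -H !mxE.
apply: eq_bigr => j _; rewrite !mxE. reflexivity.
Qed.

Lemma quad_diag n (w d : 'rV[C]_n) :
  (w *m diag_mx d *m w^H) 0 0 = \sum_k d 0 k * (w 0 k * conjC (w 0 k)).
Proof.
rewrite mul_mx_diag !mxE; apply: eq_bigr => k _; rewrite !mxE.
rewrite [w 0 k * d 0 k]mulrC -mulrA; reflexivity.
Qed.

Lemma quad_diag_ge0 n (w d : 'rV[C]_n) : (forall k, 0 <= d 0 k) ->
  0 <= (w *m diag_mx d *m w^H) 0 0.
Proof.
move=> hd; rewrite quad_diag; apply: sumr_ge0 => k _.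
apply: mulr_ge0; [exact: hd | exact: mul_conjC_ge0].
Qed.

Lemma psd_herm n (M : 'M[C]_n) : psdmx M -> M^H = M.
Proof. by case. Qed.

Lemma psd_quad n (M : 'M[C]_n) (v : 'rV[C]_n) : psdmx M -> 0 <= (v *m M *m v^H) 0 0.
Proof. by case=> _; apply. Qed.

Lemma quad_row_eigen n (A : 'M[C]_n) k : A^H = A ->
  (row k (spectralmx A) *m A *m (row k (spectralmx A))^H) 0 0 = spectral_diag A 0 k.
Proof.
move=> hA; rewrite row_eigen // -scalemxAl mxE row_unit ?mulr1 //.
exact: spectral_unitarymx.
Qed.

Lemma sqrt_exists n (A : 'M[C]_n) : psdmx A -> exists X, psdmx X /\ X *m X = A.
Proof.
move=> pA; have hA := psd_herm pA.
set P := spectralmx A; set s := spectral_diag A.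
have Pu : P \is unitarymx by exact: spectral_unitarymx.
have s_ge0 : forall k, 0 <= s 0 k.
  move=> k; rewrite /s -quad_row_eigen //; exact: psd_quad.
pose t := \row_k sqrtC (s 0 k).
have t_ge0 : forall k, 0 <= t 0 k by move=> k; rewrite mxE sqrtC_ge0.
have dt : (diag_mx t)^H = diag_mx t.
  apply/matrixP => i j; rewrite !mxE; case: (eqVneq i j) => [->|ij].
    rewrite !mulr1n; apply: conj_Creal; apply: ger0_real.
    by rewrite sqrtC_ge0.
  rewrite !mulr0n; exact: conjc0.
exists (P^H *m diag_mx t *m P); split; [split|].
- rewrite !adjmx_mul adjmxK dt mulmxA; reflexivity.
- move=> v.
  have -> : v *m (P^H *m diag_mx t *m P) *m v^H = (v *m P^H) *m diag_mx t *m (v *m P^H)^H.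
    by rewrite adjmx_mul adjmxK !mulmxA.
  exact: quad_diag_ge0.
- have -> : P^H *m diag_mx t *m P *m (P^H *m diag_mx t *m P) =
    P^H *m (diag_mx t *m (P *m P^H) *m diag_mx t) *m P by rewrite !mulmxA.
  rewrite (unitary_adj Pu) mulmx1 mulmx_diag.
  have -> : \row_j (t 0 j * t 0 j) = s.
    apply/rowP => j; rewrite !mxE -expr2 sqrtCK; reflexivity.
  symmetry; exact: spectral_decomp.
Qed.

Lemma sqrtmx_spec n (A : 'M[C]_n) : psdmx A ->
  psdmx (sqrtmx A) /\ sqrtmx A *m sqrtmx A = A.
Proof.
move=> pA; rewrite /sqrtmx; apply: (epsilon_spec (inhabits 0) (fun X => psdmx X /\ X *m X = A)).
exact: sqrt_exists.
Qed.

Lemma quad_entry n (v : 'rV[C]_n) (M : 'M[C]_n) :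
  (v *m M *m v^H) 0 0 = \sum_i \sum_j v 0 i * M i j * conjC (v 0 j).
Proof.
rewrite mxE; under eq_bigr => j _ do rewrite mxE mulr_suml.
rewrite exchange_big; apply: eq_bigr => i _; apply: eq_bigr => j _.
rewrite !mxE; reflexivity.
Qed.

Lemma quadD n (v : 'rV[C]_n) (M N : 'M[C]_n) :
  (v *m (M + N) *m v^H) 0 0 = (v *m M *m v^H) 0 0 + (v *m N *m v^H) 0 0.
Proof. by rewrite mulmxDr mulmxDl mxE. Qed.

Lemma quadN n (v : 'rV[C]_n) (M : 'M[C]_n) :
  (v *m (- M) *m v^H) 0 0 = - (v *m M *m v^H) 0 0.
Proof. by rewrite mulmxN mulNmx mxE. Qed.

Lemma quadB n (v : 'rV[C]_n) (M N : 'M[C]_n) :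
  (v *m (M - N) *m v^H) 0 0 = (v *m M *m v^H) 0 0 - (v *m N *m v^H) 0 0.
Proof. by rewrite quadD quadN. Qed.

Lemma quadZ n (v : 'rV[C]_n) (a : C) (M : 'M[C]_n) :
  (v *m (a *: M) *m v^H) 0 0 = a * (v *m M *m v^H) 0 0.
Proof. by rewrite -scalemxAr -scalemxAl mxE. Qed.

Lemma sum_quad n (P Q : 'M[C]_n) : P \is unitarymx ->
  \sum_k (row k P *m Q *m (row k P)^H) 0 0 = \tr Q.
Proof.
move=> Pu.
have -> : \sum_k (row k P *m Q *m (row k P)^H) 0 0 = \tr (P *m Q *m P^H).
  apply: eq_bigr => k _; rewrite !mxE; apply: eq_bigr => j _; rewrite !mxE.
  congr (_ * _); apply: eq_bigr => l _; rewrite !mxE; reflexivity.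
rewrite mxtrace_mulC mulmxA (unitary_adj' Pu) mul1mx; reflexivity.
Qed.

Lemma zmod_id (V : zmodType) (a b c d : V) :
  (a + b - (c + d)) + ((a - b) + (c - d)) = (a - d) *+ 2.
Proof.
rewrite mulr2n opprD addrACA.
rewrite [a + b + _]addrACA subrr addr0.
rewrite [- c + - d + _]addrACA [-c + c]addrC subrr add0r.
by rewrite addrACA.
Qed.

Lemma PS n (X Y : 'M[C]_n) : psdmx X -> psdmx Y ->
  exists2 P : 'M[C]_n, P \is unitarymx &
   \tr ((X - Y) *m (X - Y)) <=
     \sum_k `|(row k P *m (X *m X - Y *m Y) *m (row k P)^H) 0 0|.
Proof.
move=> pX pY; set D := X - Y.
have hD : D^H = D by rewrite adjmxB !psd_herm.
set P := spectralmx D; set mu := spectral_diag D.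
have Pu : P \is unitarymx by exact: spectral_unitarymx.
exists P => //.
rewrite -(sum_quad (D *m D) Pu); apply: ler_sum => k _.
set v := row k P.
have vD : v *m D = mu 0 k *: v by exact: row_eigen.
have vv : (v *m v^H) 0 0 = 1 by exact: row_unit.
have muE : mu 0 k = (v *m X *m v^H) 0 0 - (v *m Y *m v^H) 0 0.
  by rewrite -quadB -[mu 0 k](quad_row_eigen k hD).
have a0 := psd_quad v pX; have b0 := psd_quad v pY.
set a := (v *m X *m v^H) 0 0 in muE a0 *; set b := (v *m Y *m v^H) 0 0 in muE b0 *.
have mureal : mu 0 k \is Num.real by rewrite muE rpredB // ger0_real.
have Dv : D *m v^H = mu 0 k *: v^H.
  by rewrite -{1}hD -adjmx_mul vD adjmxZ (conj_Creal mureal).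
have -> : (v *m (D *m D) *m v^H) 0 0 = mu 0 k ^+ 2.
  by rewrite mulmxA vD -scalemxAl vD scalerA -scalemxAl mxE vv mulr1 expr2.
have DS : D *m (X + Y) + (X + Y) *m D = (X *m X - Y *m Y) *+ 2.
  by rewrite /D mulmxBl mulmxDl !mulmxDr !mulmxN zmod_id.
have E2 : (v *m (X *m X - Y *m Y) *m v^H) 0 0 = mu 0 k * (a + b).
  apply: (@pmulrnI _ 2) => //.
  rewrite [LHS]mulr2n -quadD -mulr2n -DS quadD.
  have T1 : (v *m (D *m (X + Y)) *m v^H) 0 0 = mu 0 k * (a + b).
    by rewrite mulmxA vD -!scalemxAl mxE quadD.
  have T2 : (v *m ((X + Y) *m D) *m v^H) 0 0 = mu 0 k * (a + b).
    by rewrite mulmxA -mulmxA Dv -scalemxAr mxE quadD.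
  by rewrite T1 T2 mulr2n.
rewrite E2 normrM (ger0_norm (addr_ge0 a0 b0)) -(real_normK mureal) expr2.
apply: ler_wpM2l; first exact: normr_ge0.
rewrite muE; apply: (le_trans (ler_normB _ _)).
by rewrite !ger0_norm.
Qed.

End S.


Section T.
Variable R : realType.
Local Notation C := (R[i]).
Local Notation "M ^H" := (adjmx M) (at level 8, format "M ^H").

Lemma psd_conj m n (W : 'M[C]_(m, n)) (M : 'M[C]_n) :
  psdmx M -> psdmx (W *m M *m W^H).
Proof.
move=> pM; split.
  by rewrite !adjmx_mul adjmxK (psd_herm pM) mulmxA.
move=> v; have -> : v *m (W *m M *m W^H) *m v^H = (v *m W) *m M *m (v *m W)^H.
  by rewrite adjmx_mul !mulmxA.
exact: psd_quad.
Qed.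

Lemma psd1 n : psdmx (1%:M : 'M[C]_n).
Proof.
split; first exact: adjmx1.
by move=> v; rewrite mulmx1 mxE sumr_ge0 // => i _; rewrite !mxE mul_conjC_ge0.
Qed.

Lemma psdD n (M N : 'M[C]_n) : psdmx M -> psdmx N -> psdmx (M + N).
Proof.
move=> pM pN; split; first by rewrite adjmxD !psd_herm.
by move=> v; rewrite quadD addr_ge0 // psd_quad.
Qed.

Lemma psd0 n : psdmx (0 : 'M[C]_n).
Proof.
split; first by apply/matrixP => i j; rewrite !mxE conjc0.
by move=> v; rewrite mulmx0 mul0mx mxE.
Qed.

Lemma psd_sum n I (r : seq I) (F : I -> 'M[C]_n) :
  (forall i, psdmx (F i)) -> psdmx (\sum_(i <- r) F i).
Proof.
move=> pF; elim: r => [|a r IH]; first by rewrite big_nil; exact: psd0.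
by rewrite big_cons; apply: psdD.
Qed.

Lemma psdZ n (c : C) (M : 'M[C]_n) : 0 <= c -> psdmx M -> psdmx (c *: M).
Proof.
move=> c0 pM; split.
  by rewrite adjmxZ (psd_herm pM) conj_Creal // ger0_real.
by move=> v; rewrite quadZ mulr_ge0 // psd_quad.
Qed.

Lemma adjmx_tens m n p q (A : 'M[C]_(m, n)) (B : 'M[C]_(p, q)) :
  (tensmx A B)^H = tensmx A^H B^H.
Proof. by apply/matrixP => i j; rewrite !mxE rmorphM. Qed.

Lemma psd_tens m n (A : 'M[C]_m) (B : 'M[C]_n) :
  psdmx A -> psdmx B -> psdmx (tensmx A B).
Proof.
move=> pA pB.
have [pa ea] := sqrtmx_spec pA; have [pb eb] := sqrtmx_spec pB.
set a := sqrtmx A in pa ea; set b := sqrtmx B in pb eb.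
have -> : tensmx A B = tensmx a b *m 1%:M *m (tensmx a b)^H.
  by rewrite mulmx1 adjmx_tens (psd_herm pa) (psd_herm pb) tensmx_mul ea eb.
exact/psd_conj/psd1.
Qed.

Lemma mxtens_index_eq m n (i k : 'I_m) (j l : 'I_n) :
  (mxtens_index (i, j) == mxtens_index (k, l)) = (i == k) && (j == l).
Proof. by rewrite (inj_eq (can_inj (@mxtens_indexK m n))) xpair_eqE. Qed.

Lemma tens11 m n : tensmx (1%:M : 'M[C]_m) (1%:M : 'M[C]_n) = 1%:M.
Proof.
apply/matrixP => x y.
case: (mxtens_indexP x) => i j; case: (mxtens_indexP y) => k l.
by rewrite tensmxE !mxE mxtens_index_eq; case: (i == k); case: (j == l); rewrite ?mulr1 ?mulr0 ?mul0r.
Qed.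

Lemma tensmxDl m n p q (A B : 'M[C]_(m, n)) (D : 'M[C]_(p, q)) :
  tensmx (A + B) D = tensmx A D + tensmx B D.
Proof. by apply/matrixP => i j; rewrite !mxE mulrDl. Qed.

Lemma tensmxDr m n p q (A : 'M[C]_(m, n)) (B D : 'M[C]_(p, q)) :
  tensmx A (B + D) = tensmx A B + tensmx A D.
Proof. by apply/matrixP => i j; rewrite !mxE mulrDr. Qed.

Lemma tensmxZl m n p q (c : C) (A : 'M[C]_(m, n)) (D : 'M[C]_(p, q)) :
  tensmx (c *: A) D = c *: tensmx A D.
Proof. by apply/matrixP => i j; rewrite !mxE mulrA. Qed.

Lemma tensmxZr m n p q (c : C) (A : 'M[C]_(m, n)) (D : 'M[C]_(p, q)) :
  tensmx A (c *: D) = c *: tensmx A D.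
Proof. by apply/matrixP => i j; rewrite !mxE mulrCA. Qed.

Lemma sum_tens_index m n (F : 'I_(m * n) -> C) :
  \sum_k F k = \sum_(i < m) \sum_(j < n) F (mxtens_index (i, j)).
Proof.
rewrite pair_big /=; apply: reindex => /=.
exists (@mxtens_unindex m n) => [[x y] _|x _]; rewrite /= ?mxtens_indexK ?mxtens_unindexK //.
Qed.

Lemma tr_tens m n (A : 'M[C]_m) (B : 'M[C]_n) : \tr (tensmx A B) = \tr A * \tr B.
Proof.
rewrite /mxtrace mulr_sum; apply: eq_bigr => k _; rewrite !mxE; reflexivity.
Qed.

Lemma tr_trB m n (M : 'M[C]_(m * n)) : \tr (trB M) = \tr M.
Proof.
rewrite /mxtrace sum_tens_index; apply: eq_bigr => i _; rewrite mxE; reflexivity.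
Qed.

Lemma tr_trA m n (M : 'M[C]_(m * n)) : \tr (trA M) = \tr M.
Proof.
rewrite /mxtrace sum_tens_index exchange_big; apply: eq_bigr => j _; rewrite mxE.
reflexivity.
Qed.

Lemma sum_delta n (c : 'I_n) (F : 'I_n -> C) :
  \sum_a ((a == c)%:R * F a) = F c.
Proof.
rewrite (bigD1 c) //= eqxx mul1r big1 ?addr0 // => a /negPf ->; exact: mul0r.
Qed.

Definition EB m n (j : 'I_n) : 'M[C]_(m, m * n) :=
  \matrix_(i, k) ((k == mxtens_index (i, j))%:R).
Definition EA m n (i : 'I_m) : 'M[C]_(n, m * n) :=
  \matrix_(j, k) ((k == mxtens_index (i, j))%:R).

Lemma trB_conj m n (M : 'M[C]_(m * n)) : trB M = \sum_j EB m j *m M *m (EB m j)^H.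
Proof.
apply/matrixP => i k; rewrite !mxE summxE; apply: eq_bigr => j _.
rewrite !mxE.
under eq_bigr => b _ do rewrite !mxE.
under eq_bigr => b _ do under eq_bigr => a _ do rewrite !mxE.
rewrite -(sum_delta (mxtens_index (k, j))); apply: eq_bigr => b _.
by rewrite sum_delta conjc_nat mulrC.
Qed.

Lemma trA_conj m n (M : 'M[C]_(m * n)) : trA M = \sum_i EA n i *m M *m (EA n i)^H.
Proof.
apply/matrixP => j l; rewrite !mxE summxE; apply: eq_bigr => i _.
rewrite !mxE.
under eq_bigr => b _ do rewrite !mxE.
under eq_bigr => b _ do under eq_bigr => a _ do rewrite !mxE.
rewrite -(sum_delta (mxtens_index (i, l))); apply: eq_bigr => b _.
by rewrite sum_delta conjc_nat mulrC.
Qed.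

Lemma psd_trB m n (M : 'M[C]_(m * n)) : psdmx M -> psdmx (trB M).
Proof. by move=> pM; rewrite trB_conj; apply: psd_sum => j; apply: psd_conj. Qed.

Lemma psd_trA m n (M : 'M[C]_(m * n)) : psdmx M -> psdmx (trA M).
Proof. by move=> pM; rewrite trA_conj; apply: psd_sum => j; apply: psd_conj. Qed.

Lemma trB_lin m n (a b : C) (M : 'M[C]_(m * n)) :
  trB (a *: M + b *: 1%:M) = a *: trB M + (b * n%:R) *: 1%:M.
Proof.
apply/matrixP => i k; rewrite !mxE.
under eq_bigr => j _ do rewrite !mxE mxtens_index_eq eqxx andbT.
rewrite big_split /= -mulr_sumr sumr_const card_ord.
congr (_ + _); by rewrite mulr_natr mulrnAl.
Qed.

Lemma trA_lin m n (a b : C) (M : 'M[C]_(m * n)) :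
  trA (a *: M + b *: 1%:M) = a *: trA M + (b * m%:R) *: 1%:M.
Proof.
apply/matrixP => j l; rewrite !mxE.
under eq_bigr => i _ do rewrite !mxE mxtens_index_eq eqxx /=.
rewrite big_split /= -mulr_sumr sumr_const card_ord.
congr (_ + _); by rewrite mulr_natr mulrnAl.
Qed.

End T.


Section U.
Variable R : realType.
Local Notation C := (R[i]).
Local Notation "M ^H" := (adjmx M) (at level 8, format "M ^H").

Lemma quad_normD n (v : 'rV[C]_n) (M N : 'M[C]_n) :
  `|(v *m (M + N) *m v^H) 0 0| <= `|(v *m M *m v^H) 0 0| + `|(v *m N *m v^H) 0 0|.
Proof. by rewrite quadD ler_normD. Qed.

Lemma quad_normZ n (v : 'rV[C]_n) (c : C) (Q : 'M[C]_n) : psdmx Q ->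
  `|(v *m (c *: Q) *m v^H) 0 0| = (v *m (`|c| *: Q) *m v^H) 0 0.
Proof. by move=> pQ; rewrite !quadZ normrM (ger0_norm (psd_quad v pQ)). Qed.

Lemma PS_bound n (X Y Q : 'M[C]_n) : psdmx X -> psdmx Y ->
  (forall v : 'rV[C]_n, `|(v *m (X *m X - Y *m Y) *m v^H) 0 0| <= (v *m Q *m v^H) 0 0) ->
  \tr ((X - Y) *m (X - Y)) <= \tr Q.
Proof.
move=> pX pY hQ; have [P Pu le1] := PS pX pY.
apply: (le_trans le1); rewrite -(sum_quad Q Pu); apply: ler_sum => k _; exact: hQ.
Qed.

Lemma hs_ge0 n (M : 'M[C]_n) : M^H = M -> 0 <= \tr (M *m M).
Proof.
move=> hM.
have e : forall i j, M j i = conjC (M i j).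
  by move=> i j; have := congr1 (fun A : 'M[C]_n => A j i) hM; rewrite !mxE => <-.
rewrite /mxtrace sumr_ge0 // => i _; rewrite mxE sumr_ge0 // => j _.
by rewrite (e i j) mul_conjC_ge0.
Qed.

Lemma ge0_rc (z : C) : 0 <= z -> z = rc (complex.Re z).
Proof. by case: z => a b; rewrite lecE /= => /andP[/eqP -> _]. Qed.

Lemma rc_ge0 (x : R) : (0 <= rc x) = (0 <= x).
Proof. exact: ler0c. Qed.

Lemma rc_le (x y : R) : (rc x <= rc y) = (x <= y).
Proof. exact: lecR. Qed.

Lemma hs_real n (M : 'M[C]_n) : M^H = M ->
  exists2 r : R, 0 <= r & \tr (M *m M) = rc r.
Proof.
move=> hM; have h0 := hs_ge0 hM; exists (complex.Re (\tr (M *m M))).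
  by rewrite -rc_ge0 -ge0_rc.
exact: ge0_rc.
Qed.

Lemma hs_quad n (U W : 'M[C]_n) (p q : C) :
  \tr ((p *: U - q *: W) *m (p *: U - q *: W)) + p * q * \tr ((U + W) *m (U + W)) =
  (p ^+ 2 + p * q) * \tr (U *m U) + (q ^+ 2 + p * q) * \tr (W *m W).
Proof.
rewrite !(mulmxDl, mulmxDr, mulmxN, mulNmx) opprK.
rewrite -!(scalemxAl, scalemxAr) !(mxtraceD, raddfN, mxtraceZ) /=.
rewrite !mxtraceZ. ring.
Qed.

End U.


Section V.
Variable R : realType.
Local Notation C := (R[i]).
Local Notation "M ^H" := (adjmx M) (at level 8, format "M ^H").

Lemma rcD (x y : R) : rc (x + y) = rc x + rc y. Proof. exact: rmorphD. Qed.
Lemma rcB (x y : R) : rc (x - y) = rc x - rc y. Proof. exact: rmorphB. Qed.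
Lemma rcM (x y : R) : rc (x * y) = rc x * rc y. Proof. exact: rmorphM. Qed.
Lemma rcn (n : nat) : rc (n%:R : R) = n%:R. Proof. exact: rmorph_nat. Qed.
Lemma rc1 : rc (1 : R) = 1. Proof. exact: rmorph1. Qed.
Lemma rc_inj (x y : R) : rc x = rc y -> x = y. Proof. exact: complexI. Qed.

Lemma psd_depol d (eps : R) (M : 'M[C]_(d * d)) : 0 <= eps <= 1 -> psdmx M ->
  psdmx (depol eps M).
Proof.
move=> /andP[e0 e1] pM; rewrite /depol; apply: psdD; apply: psdZ.
- by rewrite rc_ge0 subr_ge0.
- exact: pM.
- by rewrite rc_ge0 divr_ge0.
- exact: psd1.
Qed.

Lemma dd_ne0 d : (0 < d)%N -> ((d ^ 2)%:R : R) != 0.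
Proof. by move=> d0; rewrite pnatr_eq0 expn_eq0 negb_and -lt0n d0. Qed.

Lemma dn_ne0 d : (0 < d)%N -> (d%:R : R) != 0.
Proof. by move=> d0; rewrite pnatr_eq0 -lt0n. Qed.

Lemma tr_depol d (eps : R) (M : 'M[C]_(d * d)) : (0 < d)%N -> \tr M = 1 ->
  \tr (depol eps M) = 1.
Proof.
move=> d0 tM; rewrite /depol mxtraceD !mxtraceZ tM mxtrace1 mulr1 -rcn -rcM -rcD -rc1.
congr rc; rewrite mulnn; field; exact: dn_ne0.
Qed.


Lemma psd_T m n (M : 'M[C]_(m * n)) : psdmx M -> psdmx (tensmx (trB M) (trA M)).
Proof. by move=> pM; apply: psd_tens; [apply: psd_trB | apply: psd_trA]. Qed.

Lemma tr_T m n (M : 'M[C]_(m * n)) : \tr M = 1 -> \tr (tensmx (trB M) (trA M)) = 1.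
Proof. by move=> tM; rewrite tr_tens tr_trB tr_trA tM mulr1. Qed.

Lemma hs_bound n (X Y Q : 'M[C]_n) (b : R) : psdmx X -> psdmx Y ->
  (forall v : 'rV[C]_n, `|(v *m (X *m X - Y *m Y) *m v^H) 0 0| <= (v *m Q *m v^H) 0 0) ->
  \tr Q = rc b ->
  exists2 r : R, 0 <= r <= b & \tr ((X - Y) *m (X - Y)) = rc r.
Proof.
move=> pX pY hQ tQ.
have hD : (X - Y)^H = X - Y by rewrite adjmxB !psd_herm.
have [r r0 er] := hs_real hD; exists r => //.
by rewrite r0 /= -rc_le -er -tQ; apply: PS_bound.
Qed.

Lemma H_le2 m n (M : 'M[C]_(m * n)) : psdmx M -> \tr M = 1 ->
  exists2 r : R, 0 <= r <= 2 & hellinger2 M (tensmx (trB M) (trA M)) = rc r.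
Proof.
move=> pM tM; have pT := psd_T pM.
have [pX eX] := sqrtmx_spec pM; have [pY eY] := sqrtmx_spec pT.
apply: (@hs_bound _ _ _ (M + tensmx (trB M) (trA M))) => //.
- move=> v; rewrite eX eY quadB quadD.
  apply: (le_trans (ler_normB _ _)).
  by rewrite !ger0_norm ?psd_quad.
- by rewrite mxtraceD tM tr_T // -rc1 -rcD.
Qed.


Lemma num_bound2 (c1 c2 a b : C) : 0 <= a -> 0 <= b ->
  `|c1 * a + c2 * b| <= `|c1| * a + `|c2| * b.
Proof.
move=> a0 b0; apply: (le_trans (ler_normD _ _)).
by rewrite !normrM (ger0_norm a0) (ger0_norm b0).
Qed.

Lemma quad_bound2 n (v : 'rV[C]_n) (M1 M2 : 'M[C]_n) (c1 c2 e1 e2 : C) :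
  psdmx M1 -> psdmx M2 -> `|c1| = e1 -> `|c2| = e2 ->
  `|(v *m (c1 *: M1 + c2 *: M2) *m v^H) 0 0| <=
  (v *m (e1 *: M1 + e2 *: M2) *m v^H) 0 0.
Proof.
move=> p1 p2 E1 E2.
rewrite (quadD v (c1 *: M1)) (quadZ v c1) (quadZ v c2).
rewrite (quadD v (e1 *: M1)) (quadZ v e1) (quadZ v e2).
move: (psd_quad v p1) (psd_quad v p2).
move: ((v *m M1 *m v^H) 0 0) ((v *m M2 *m v^H) 0 0) => a b a0 b0.
rewrite -E1 -E2; exact: num_bound2.
Qed.

Lemma quad_bound4 n (v : 'rV[C]_n) (M1 M2 M3 M4 : 'M[C]_n) (c1 c2 c3 c4 e1 e2 e3 e4 : C) :
  psdmx M1 -> psdmx M2 -> psdmx M3 -> psdmx M4 ->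
  `|c1| = e1 -> `|c2| = e2 -> `|c3| = e3 -> `|c4| = e4 ->
  `|(v *m (c1 *: M1 + c2 *: M2 + (c3 *: M3 + c4 *: M4)) *m v^H) 0 0| <=
  (v *m (e1 *: M1 + e2 *: M2 + (e3 *: M3 + e4 *: M4)) *m v^H) 0 0.
Proof.
move=> p1 p2 p3 p4 E1 E2 E3 E4.
rewrite (quadD v (c1 *: M1 + c2 *: M2)) (quadD v (e1 *: M1 + e2 *: M2)).
apply: (le_trans (ler_normD _ _)); apply: lerD; exact: quad_bound2.
Qed.

Lemma e1_bound d (eps : R) (M : 'M[C]_(d * d)) : (0 < d)%N -> 0 <= eps <= 1 ->
  psdmx M -> \tr M = 1 ->
  exists2 r : R, 0 <= r <= 2 * eps &
    \tr ((sqrtmx (depol eps M) - sqrtmx M) *m (sqrtmx (depol eps M) - sqrtmx M)) = rc r.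
Proof.
move=> d0 he pM tM; have /andP[e0 e1] := he.
have pS := psd_depol he pM.
set c1 := rc (1 - eps) - 1; set c2 := rc (eps / (d ^ 2)%:R).
have De : depol eps M - M = c1 *: M + c2 *: 1%:M.
  by rewrite /depol /c1 scalerBl scale1r addrAC.
have n1 : `|c1| = rc eps.
  by rewrite /c1 rcB rc1 addrAC subrr add0r normrN ger0_norm // rc_ge0.
have n2 : `|c2| = c2 by rewrite ger0_norm // rc_ge0 divr_ge0.
have tQ : \tr (rc eps *: M + c2 *: 1%:M) = rc (2 * eps).
  rewrite mxtraceD !mxtraceZ tM mxtrace1 mulr1 /c2 -rcn -rcM -rcD.
  congr rc; rewrite mulnn; field; exact: dn_ne0.
move: (depol eps M) pS De => S pS De.
have [pX eX] := sqrtmx_spec pS; have [pY eY] := sqrtmx_spec pM.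
move: (sqrtmx S) (sqrtmx M) pX pY eX eY => X Y pX pY eX eY.
clearbody c1 c2.
apply: (hs_bound pX pY _ tQ) => v.
rewrite eX eY De; apply: quad_bound2 => //; exact: psd1.
Qed.

End V.


Section W.
Variable R : realType.
Local Notation C := (R[i]).
Local Notation "M ^H" := (adjmx M) (at level 8, format "M ^H").

Lemma trB_depol d (eps : R) (M : 'M[C]_(d * d)) :
  trB (depol eps M) = rc (1 - eps) *: trB M + rc (eps / (d ^ 2)%:R * d%:R) *: 1%:M.
Proof. by rewrite /depol trB_lin [rc (_ / _ * _)]rcM rcn. Qed.

Lemma trA_depol d (eps : R) (M : 'M[C]_(d * d)) :
  trA (depol eps M) = rc (1 - eps) *: trA M + rc (eps / (d ^ 2)%:R * d%:R) *: 1%:M.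
Proof. by rewrite /depol trA_lin [rc (_ / _ * _)]rcM rcn. Qed.

Lemma zmod_id2 (V : zmodType) (x y z t : V) : x + y + z - t = x - t + y + z.
Proof. by rewrite addrAC [x + y - t]addrAC. Qed.

Lemma tens_expand m (A B : 'M[C]_m) (a b : C) :
  tensmx (a *: A + b *: 1%:M) (a *: B + b *: 1%:M) - tensmx A B =
  (a * a - 1) *: tensmx A B + (a * b) *: tensmx A 1%:M +
  ((b * a) *: tensmx 1%:M B + (b * b) *: tensmx (1%:M : 'M_m) (1%:M : 'M_m)).
Proof.
rewrite tensmxDl !tensmxZl !tensmxDr !tensmxZr !scalerDr !scalerA scalerBl scale1r.
exact: zmod_id2.
Qed.

Lemma tr4 n (e1 e2 e3 e4 : C) (T1 T2 T3 T4 : 'M[C]_n) :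
  \tr (e1 *: T1 + e2 *: T2 + (e3 *: T3 + e4 *: T4)) =
  e1 * \tr T1 + e2 * \tr T2 + (e3 * \tr T3 + e4 * \tr T4).
Proof. by rewrite !mxtraceD !mxtraceZ. Qed.

Lemma e2_bound d (eps : R) (M : 'M[C]_(d * d)) : (0 < d)%N -> 0 <= eps <= 1 ->
  psdmx M -> \tr M = 1 ->
  exists2 r : R, 0 <= r <= 4 * eps &
    \tr ((sqrtmx (tensmx (trB (depol eps M)) (trA (depol eps M))) -
          sqrtmx (tensmx (trB M) (trA M))) *m
         (sqrtmx (tensmx (trB (depol eps M)) (trA (depol eps M))) -
          sqrtmx (tensmx (trB M) (trA M)))) = rc r.
Proof.
move=> d0 he pM tM; have /andP[e0 e1] := he.
have pS := psd_T (psd_depol he pM).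
rewrite trB_depol trA_depol in pS *.
have pA : psdmx (trB M) by apply: psd_trB.
have pB : psdmx (trA M) by apply: psd_trA.
have tA : \tr (trB M) = 1 by rewrite tr_trB.
have tB : \tr (trA M) = 1 by rewrite tr_trA.
move: (trB M) (trA M) pA pB tA tB pS => A B pA pB tA tB pS.
set al := 1 - eps in pS *; set be := eps / (d ^ 2)%:R * d%:R in pS *.
have al0 : 0 <= al by rewrite subr_ge0.
have al1 : al <= 1 by rewrite /al lerBlDr lerDl.
have be0 : 0 <= be by rewrite mulr_ge0 // divr_ge0.
have beE : be * d%:R = eps by rewrite /be natrX; field; exact: dn_ne0.
have De := tens_expand A B (rc al) (rc be).
have n1 : `|rc al * rc al - 1| = rc (1 - al ^+ 2).
  rewrite -rcM -rc1 -rcB ler0_norm; last by rewrite rc_le subr_le0 mulr_ile1.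
  by rewrite -rmorphN /= opprB expr2.
have n2 : `|rc al * rc be| = rc (al * be) by rewrite -rcM ger0_norm // rc_ge0 mulr_ge0.
have n3 : `|rc be * rc al| = rc (al * be) by rewrite mulrC n2.
have n4 : `|rc be * rc be| = rc (be ^+ 2) by rewrite -rcM expr2 ger0_norm // rc_ge0 mulr_ge0.
have tQ : \tr (rc (1 - al ^+ 2) *: tensmx A B + rc (al * be) *: tensmx A 1%:M +
   (rc (al * be) *: tensmx 1%:M B + rc (be ^+ 2) *: tensmx (1%:M : 'M_d) (1%:M : 'M_d)))
   = rc (4 * eps - 2 * eps ^+ 2).
  rewrite tr4 !tr_tens tA tB !mxtrace1.
  rewrite -!rcn -!rcM -!rcD; congr rc.
  rewrite /al -beE; ring.
move: (tensmx (rc al *: A + rc be *: 1%:M) (rc al *: B + rc be *: 1%:M)) pS De => S pS De.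
have [pX eX] := sqrtmx_spec pS.
have pT : psdmx (tensmx A B) by apply: psd_tens.
have [pY eY] := sqrtmx_spec pT.
move: (sqrtmx S) (sqrtmx (tensmx A B)) pX pY eX eY => X Y pX pY eX eY.
suff [r r0 er] : exists2 r : R, 0 <= r <= 4 * eps - 2 * eps ^+ 2 &
    \tr ((X - Y) *m (X - Y)) = rc r.
  exists r => //; move: r0 => /andP[-> /= rb]; apply: (le_trans rb).
  by rewrite lerBlDr lerDl mulr_ge0 // sqr_ge0.
apply: (hs_bound pX pY _ tQ) => v.
have p1 : psdmx (1%:M : 'M[C]_d) by exact: psd1.
have pA1 := psd_tens pA p1; have p1B := psd_tens p1 pB; have p11 := psd_tens p1 p1.
rewrite eX eY De; exact: (quad_bound4 v pT pA1 p1B p11 n1 n2 n3 n4).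
Qed.

End W.


Section X.
Variable R : realType.
Local Notation C := (R[i]).
Local Notation "M ^H" := (adjmx M) (at level 8, format "M ^H").

Lemma quad_real n (U W : 'M[C]_n) (u w z : R) : U^H = U -> W^H = W ->
  \tr (U *m U) = rc u -> \tr (W *m W) = rc w -> \tr ((U + W) *m (U + W)) = rc z ->
  forall p q : R, p * q * z <= (p ^+ 2 + p * q) * u + (q ^+ 2 + p * q) * w.
Proof.
move=> hU hW eu ew ez p q.
have hV : (rc p *: U - rc q *: W)^H = rc p *: U - rc q *: W.
  by rewrite adjmxB !adjmxZ !rc_conj hU hW.
have [y y0 ey] := hs_real hV.
have := hs_quad U W (rc p) (rc q).
rewrite ey eu ew ez -!rcM -rmorphXn -!rcD -!rcM -rmorphXn -!rcD -!rcM -rcD => /rc_inj E.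
lra.
Qed.

Lemma final_real (eps hr hs x1 x2 he : R) : 0 < eps -> eps <= 1 ->
  0 <= hr <= 2 -> 0 <= hs <= 2 -> 0 <= x1 <= 2 * eps -> 0 <= x2 <= 4 * eps -> 0 <= he ->
  (forall p q : R, p * q * he <= (p ^+ 2 + p * q) * x1 + (q ^+ 2 + p * q) * x2) ->
  (forall p q : R, p * q * hs <= (p ^+ 2 + p * q) * hr + (q ^+ 2 + p * q) * he) ->
  hs <= (4 + 4 * Num.sqrt 2) * Num.sqrt eps + hr.
Proof.
move=> e0 e1 /andP[hr0 hr2] /andP[hs0 hs2] /andP[x10 x1b] /andP[x20 x2b] he0 Q1 Q2.
set r := Num.sqrt 2; set s := Num.sqrt eps; set a := Num.sqrt hr.
have r0 : 0 < r by rewrite sqrtr_gt0.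
have r2 : r ^+ 2 = 2 by rewrite sqr_sqrtr.
have s0 : 0 < s by rewrite sqrtr_gt0.
have s2 : s ^+ 2 = eps by rewrite sqr_sqrtr // ltW.
have a0 : 0 <= a by rewrite sqrtr_ge0.
have a2 : a ^+ 2 = hr by rewrite sqr_sqrtr.
have ar : a <= r by rewrite ler_sqrt // ltr0n.
set x := (2 + r) * s.
have x0 : 0 < x by rewrite mulr_gt0 // addr_gt0.
have goalE : (4 + 4 * r) * s = 2 * r * x by rewrite /x; nra.
rewrite goalE -a2.
have x2E : x ^+ 2 = (6 + 4 * r) * eps.
  rewrite /x exprMn s2; congr (_ * _); rewrite sqrrD r2; ring.
have hex : he <= x ^+ 2.
  have H := Q1 r 1; rewrite r2 expr1n !mulr1 in H.
  have E : r * ((6 + 4 * r) * eps) = 6 * r * eps + 4 * (r ^+ 2) * eps by ring.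
  rewrite r2 in E.
  have : r * he <= r * x ^+ 2.
    rewrite x2E E; nra.
  by rewrite ler_pM2l.
case: (lerP r (a + x)) => hax.
- apply: (le_trans hs2).
  have : (r - a) * (r + a) <= x * (2 * r) by nra.
  nra.
case: (eqVneq a 0) => [az|anz].
- have := Q2 1 1; rewrite !expr1n !mulr1 -a2 az expr0n /= => H.
  have : x ^+ 2 <= r * x by nra.
  nra.
have ap : 0 < a by rewrite lt_def anz a0.
have H := Q2 x a; rewrite -a2 in H.
have H2 : x * a * hs <= x * a * (a + x) ^+ 2.
  apply: (le_trans H).
  have : (a ^+ 2 + x * a) * he <= (a ^+ 2 + x * a) * x ^+ 2.
    by apply: ler_wpM2l => //; nra.
  nra.
have xa : 0 < x * a by rewrite mulr_gt0.
rewrite ler_pM2l // in H2.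
apply: (le_trans H2); nra.
Qed.

End X.


Local Notation "M ^H" := (adjmx M) (at level 8, format "M ^H").

Lemma zmod_id3 (V : zmodType) (a b c e : V) :
  (a - b) + ((c - a) + - (e - b)) = c - e.
Proof. by rewrite opprB addrCA [a - b + _]addrA subrK addrA subrK. Qed.

Lemma hsN (R : realType) n (U : 'M[R[i]]_n) : \tr ((- U) *m (- U)) = \tr (U *m U).
Proof. by rewrite mulmxN mulNmx opprK. Qed.

Unset Implicit Arguments.

Theorem lemma4p4 (R : realType) (d : nat) (rho : 'M[R[i]]_(d * d)) (eps : R) :
  density rho -> 0 <= eps <= 1 ->
  let sigma := depol eps rho in
  hellinger2 sigma (tensmx (trB sigma) (trA sigma))
  <= rc ((4 + 4 * Num.sqrt 2) * Num.sqrt eps)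
     + hellinger2 rho (tensmx (trB rho) (trA rho)).
Proof.
move=> [pM tM] he; rewrite [X in is_true X]/=; set sigma := depol eps rho.
have d0 : (0 < d)%N.
  move: rho pM tM sigma; case: d => // rho _.
  by rewrite /mxtrace big_ord0 => /eqP; rewrite eq_sym oner_eq0.
case/andP: (he) => e0 e1.
case: (eqVneq eps 0) => [ez|enz].
  have -> : sigma = rho.
    by rewrite /sigma /depol ez subr0 mul0r /rc rmorph1 rmorph0 scale1r scale0r addr0.
  by rewrite ez sqrtr0 mulr0 /rc rmorph0 add0r.
have ep : 0 < eps by rewrite lt_def enz e0.
have pS : psdmx sigma := psd_depol he pM.
have tS : \tr sigma = 1 := tr_depol eps d0 tM.
have [hr hrb Hr] := H_le2 pM tM.
have [hs hsb Hs] := H_le2 pS tS.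
have [x1 x1b E1] := e1_bound d0 he pM tM.
have [x2 x2b E2] := e2_bound d0 he pM tM.
rewrite Hr Hs -rcD rc_le.
rewrite /hellinger2 /= in Hr Hs.
have [pa _] := sqrtmx_spec pM.
have [pb _] := sqrtmx_spec pS.
have [pc _] := sqrtmx_spec (psd_T pM).
have [pe _] := sqrtmx_spec (psd_T pS).
rewrite -/sigma in E1 E2.
move: (sqrtmx rho) (sqrtmx (tensmx (trB rho) (trA rho))) (sqrtmx sigma)
  (sqrtmx (tensmx (trB sigma) (trA sigma))) pa pb pc pe Hr Hs E1 E2
  => a b c e pa pc pb pe Hr Hs E1 E2.
have ha := psd_herm pa; have hb := psd_herm pb.
have hc := psd_herm pc; have he' := psd_herm pe.
have hU1 : (c - a)^H = c - a by rewrite adjmxB hc ha.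
have hU2 : (- (e - b))^H = - (e - b) by rewrite adjmxN adjmxB he' hb.
have hD : (a - b)^H = a - b by rewrite adjmxB ha hb.
have hW : (c - a + - (e - b))^H = c - a + - (e - b) by rewrite adjmxD hU1 hU2.
have [z z0 Ez] := hs_real hW.
have E2' : \tr ((- (e - b)) *m (- (e - b))) = rc x2 by rewrite hsN.
have Q1 := quad_real hU1 hU2 E1 E2' Ez.
have Hs' : \tr ((a - b + (c - a + - (e - b))) *m (a - b + (c - a + - (e - b)))) = rc hs.
  by rewrite zmod_id3.
have Q2 := quad_real hD hW Hr Ez Hs'.
exact: (final_real ep e1 hrb hsb x1b x2b z0 Q1 Q2).
Qed.
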